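(* Let $\mathcal{U}=\{u_\rho:\mathcal{X}\to\mathbb{R}\mid \rho\in\mathbb{R}\}$ be a real-valued function class such that for every $x\in\mathcal{X}$ the dual function $u^*_x(\rho):=u_\rho(x)$ is piecewise continuous with at most $B_1$ discontinuities and at most $B_2$ local maxima (with $B_1+B_2\ge 2$). Then $\mathrm{Pdim}(\mathcal{U})=O(\log(B_1+B_2))$.
   Context: Piecewise continuous with at most $B_1$ discontinuities: continuous outside a set of at most $B_1$ points. Local maximum: a point $\rho_0$ with an open neighborhood on which the function is $\le$ its value at $\rho_0$. Pseudo-dimension: a set $\{x_1,\dots,x_m\}\subset\mathcal{X}$ is pseudo-shattered by $\mathcal{U}$ if there exist thresholds $r_1,\dots,r_m\in\mathbb{R}$ such that $|\{(\mathrm{sign}(u(x_1)-r_1),\dots,\mathrm{sign}(u(x_m)-r_m)) : u\in\mathcal{U}\}|=2^m$; $\mathrm{Pdim}(\mathcal{U})$ is the largest size of a pseudo-shattered set. *)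

(* Defs.v *)
From Stdlib Require Import Reals List.
Open Scope R_scope.

Definition piecewise_continuous_at_most (f : R -> R) (B1 : nat) : Prop :=
  exists D : list R, (length D <= B1)%nat /\
    forall t, ~ In t D -> continuity_pt f t.

Definition local_max (f : R -> R) (t0 : R) : Prop :=
  exists eps, 0 < eps /\ forall t, Rabs (t - t0) < eps -> f t <= f t0.

Definition at_most_local_maxima (f : R -> R) (B2 : nat) : Prop :=
  forall L : list R, NoDup L -> (forall t, In t L -> local_max f t) ->
    (length L <= B2)%nat.

Definition pseudo_shattered {X : Type} (u : R -> X -> R) (m : nat)
    (x : nat -> X) : Prop :=
  (forall i j, (i < m)%nat -> (j < m)%nat -> x i = x j -> i = j) /\
  exists r : nat -> R,
    forall b : nat -> bool, exists rho : R,
      forall i, (i < m)%nat -> (r i <= u rho (x i) <-> b i = true).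

(* Main.v *)
Require Import Defs.
From Stdlib Require Import Reals List Lra Lia Classical Sorting.Permutation Sorting.Sorted.
Import ListNotations.
Open Scope R_scope.

Definition gb (f : R -> R) (r : R) (t : R) : bool :=
  if Rle_dec r (f t) then true else false.

Lemma gb_true f r t : gb f r t = true <-> r <= f t.
Proof. unfold gb; destruct (Rle_dec r (f t)); split; intros; auto; discriminate. Qed.
Lemma gb_false f r t : gb f r t = false <-> f t < r.
Proof. unfold gb; destruct (Rle_dec r (f t)); split; intros; try lra; auto; discriminate. Qed.

Fixpoint chg (g : R -> bool) (l : list R) : nat :=
  match l with
  | a :: l' => match l' with
               | b :: _ => ((if Bool.eqb (g a) (g b) then 0 else 1) + chg g l')%nat
               | [] => 0%nat
               end
  | [] => 0%nat
  end.

Lemma chg_cons g a b l : chg g (a :: b :: l) = ((if Bool.eqb (g a) (g b) then 0 else 1) + chg g (b :: l))%nat.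
Proof. reflexivity. Qed.

Definition wit (f : R -> R) (D : list R) (w : R) : Prop := local_max f w \/ In w D.

Lemma bump f r D : (forall t, ~ In t D -> continuity_pt f t) ->
  forall a c b, a < c -> c < b -> f a < r -> r <= f c -> f b < r ->
  exists w, a <= w <= b /\ wit f D w.
Proof.
  intros Hc a c b Hac Hcb Ha Hc' Hb.
  destruct (classic (exists d, In d D /\ a <= d <= b)) as [[d [Hd Hd']]|Hn].
  - exists d; split; auto; right; auto.
  - destruct (continuity_ab_maj f a b) as [Mx [HM1 HM2]].
    + lra.
    + intros c0 Hc0; apply Hc; intro Hin; apply Hn; exists c0; auto.
    + assert (f c <= f Mx) by (apply HM1; lra).
      assert (a < Mx). { destruct (Rle_lt_or_eq_dec a Mx) as [h|h]; try lra. subst; lra. }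
      assert (Mx < b). { destruct (Rle_lt_or_eq_dec Mx b) as [h|h]; try lra. subst; lra. }
      exists Mx; split; [lra|]. left.
      exists (Rmin (Mx - a) (b - Mx)); split.
      * apply Rmin_glb_lt; lra.
      * intros t Ht. apply HM1.
        pose proof (Rmin_l (Mx - a) (b - Mx)). pose proof (Rmin_r (Mx - a) (b - Mx)).
        apply Rabs_def2 in Ht. lra.
Qed.

Definition good f r D (T W : list R) : Prop :=
  NoDup W /\ (forall w, In w W -> hd 0%R T <= w /\ wit f D w) /\
  (chg (gb f r) T <= 4 * length W + (if gb f r (hd 0%R T) then 3 else 2))%nat.

Lemma ss_lt a b l : StronglySorted Rlt (a :: b :: l) -> a < b.
Proof. intros H; inversion H; subst. inversion H3; auto. Qed.

Lemma ss_all a l : StronglySorted Rlt (a :: l) -> forall y, In y l -> a < y.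
Proof. intros H; inversion H; subst. rewrite Forall_forall in H3; auto. Qed.

Lemma ss_tl a l : StronglySorted Rlt (a :: l) -> StronglySorted Rlt l.
Proof. intros H; inversion H; auto. Qed.

Lemma ss_skip a b l : StronglySorted Rlt (a :: b :: l) -> StronglySorted Rlt (a :: l).
Proof. intros H; inversion H; subst. inversion H2; subst. inversion H3; subst.
  constructor; auto. Qed.

Lemma inner f r D : (forall t, ~ In t D -> continuity_pt f t) -> forall n,
  (forall T, (length T <= n)%nat -> StronglySorted Rlt T -> T <> [] -> exists W, good f r D T W) ->
  forall L a c, (length (a :: c :: L) <= S n)%nat -> StronglySorted Rlt (a :: c :: L) ->
  gb f r a = false -> gb f r c = true -> exists W, good f r D (a :: c :: L) W.
Proof.
  intros Hcont n IH L. induction L as [|c' L' IHL]; intros a c Hlen Hs Ha Hc.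
  - exists []. split; [constructor|]. split; [intros w []|].
    simpl. rewrite Ha, Hc. simpl. lia.
  - destruct (gb f r c') eqn:Hc'.
    + destruct (IHL a c') as [W HW]; auto.
      * simpl in *; lia.
      * apply ss_skip in Hs; auto.
      * exists W. destruct HW as [H1 [H2 H3]]. split; auto. split; auto.
        simpl in *. rewrite Ha, Hc, Hc' in *. simpl in *. lia.
    + pose proof (ss_lt _ _ _ Hs) as Hac. pose proof (ss_lt _ _ _ (ss_tl _ _ Hs)) as Hcc.
      apply gb_false in Ha. apply gb_false in Hc'. apply gb_true in Hc.
      destruct (bump f r D Hcont a c c' Hac Hcc Ha Hc Hc') as [w [Hw1 Hw2]].
      apply gb_false in Ha. apply gb_false in Hc'. apply gb_true in Hc.
      destruct L' as [|d0 L''].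
      * exists []. split; [constructor|]. split; [intros w' []|].
        simpl. rewrite Ha, Hc, Hc'. simpl. lia.
      * destruct (IH (d0 :: L'')) as [W [H1 [H2 H3]]].
        -- simpl in *; lia.
        -- do 3 apply ss_tl in Hs; auto.
        -- discriminate.
        -- pose proof (ss_all _ _ (ss_tl _ _ (ss_tl _ _ Hs)) d0 (or_introl eq_refl)) as Hcd.
           exists (w :: W). split; [|split].
           ++ constructor; auto. intro Hin. apply H2 in Hin. simpl in Hin. lra.
           ++ intros w' [<-|Hin]; simpl. split; auto; lra.
              apply H2 in Hin. simpl in Hin. split; [lra| tauto].
           ++ simpl in H3 |- *. rewrite Ha, Hc, Hc' in *. simpl.
              destruct (gb f r d0); simpl in *; lia.
Qed.

Lemma main1 f r D : (forall t, ~ In t D -> continuity_pt f t) -> forall n T,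
  (length T <= n)%nat -> StronglySorted Rlt T -> T <> [] -> exists W, good f r D T W.
Proof.
  intros Hcont n. induction n as [|n IH]; intros T Hlen Hs Hne.
  - destruct T; simpl in *; [congruence| lia].
  - destruct T as [|t0 [|t1 rest]]; [congruence| |].
    + exists []. split; [constructor|]. split; [intros w []|]. simpl. destruct (gb f r t0); lia.
    + pose proof (ss_lt _ _ _ Hs) as H01.
      destruct (gb f r t0) eqn:E0, (gb f r t1) eqn:E1.
      * destruct (IH (t1 :: rest)) as [W [H1 [H2 H3]]]; [simpl in *; lia| eapply ss_tl; eauto| discriminate|].
        exists W. split; auto. split.
        -- intros w Hw; apply H2 in Hw; simpl in *; split; [lra|tauto].
        -- rewrite chg_cons. cbn [hd] in *. rewrite E0, E1 in *. simpl Bool.eqb; cbv iota; lia.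
      * destruct (IH (t1 :: rest)) as [W [H1 [H2 H3]]]; [simpl in *; lia| eapply ss_tl; eauto| discriminate|].
        exists W. split; auto. split.
        -- intros w Hw; apply H2 in Hw; simpl in *; split; [lra|tauto].
        -- rewrite chg_cons. cbn [hd] in *. rewrite E0, E1 in *. simpl Bool.eqb; cbv iota; lia.
      * eapply inner; eauto.
      * destruct (IH (t1 :: rest)) as [W [H1 [H2 H3]]]; [simpl in *; lia| eapply ss_tl; eauto| discriminate|].
        exists W. split; auto. split.
        -- intros w Hw; apply H2 in Hw; simpl in *; split; [lra|tauto].
        -- rewrite chg_cons. cbn [hd] in *. rewrite E0, E1 in *. simpl Bool.eqb; cbv iota; lia.
Qed.

Lemma count_wit f D B1 B2 W : (length D <= B1)%nat -> at_most_local_maxima f B2 ->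
  NoDup W -> (forall w, In w W -> wit f D w) -> (length W <= B1 + B2)%nat.
Proof.
  intros HD HM HN HW.
  set (p := fun w => if in_dec Req_EM_T w D then true else false).
  rewrite <- (filter_length p W).
  assert (length (filter p W) <= length D)%nat.
  { apply NoDup_incl_length. apply NoDup_filter; auto.
    intros w Hw. apply filter_In in Hw. destruct Hw as [_ Hw]. unfold p in Hw.
    destruct (in_dec Req_EM_T w D); auto; discriminate. }
  assert (length (filter (fun x => negb (p x)) W) <= B2)%nat.
  { apply HM. apply NoDup_filter; auto.
    intros w Hw. apply filter_In in Hw. destruct Hw as [Hin Hw]. unfold p in Hw.
    destruct (HW w Hin); auto. destruct (in_dec Req_EM_T w D); try contradiction; discriminate. }
  lia.
Qed.

Lemma one_fun f r B1 B2 : piecewise_continuous_at_most f B1 -> at_most_local_maxima f B2 ->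
  forall T, StronglySorted Rlt T -> (chg (gb f r) T <= 4 * (B1 + B2) + 3)%nat.
Proof.
  intros [D [HD Hc]] HM T Hs. destruct T as [|t0 T'].
  - simpl; lia.
  - destruct (main1 f r D Hc (length (t0 :: T')) (t0 :: T') (le_n _) Hs ltac:(discriminate))
      as [W [H1 [H2 H3]]].
    assert (length W <= B1 + B2)%nat.
    { apply (count_wit f D); auto. intros w Hw; apply H2; auto. }
    destruct (gb f r (hd 0%R (t0 :: T'))); lia.
Qed.

Fixpoint sumchg (G : nat -> R -> bool) (k : nat) (T : list R) : nat :=
  match k with 0 => 0%nat | S k => (sumchg G k T + chg (G k) T)%nat end.

Fixpoint stepsum (G : nat -> R -> bool) (k : nat) (a b : R) : nat :=
  match k with 0 => 0%nat | S k => (stepsum G k a b + if Bool.eqb (G k a) (G k b) then 0 else 1)%nat end.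

Lemma sumchg_cons G k a b l : sumchg G k (a :: b :: l) = (stepsum G k a b + sumchg G k (b :: l))%nat.
Proof. induction k; [reflexivity|]. cbn [sumchg stepsum]. rewrite IHk, (chg_cons (G k)). lia. Qed.

Lemma stepsum_pos G k a b : (exists i, (i < k)%nat /\ G i a <> G i b) -> (1 <= stepsum G k a b)%nat.
Proof.
  induction k; intros [i [Hi Hd]]; [lia|]. simpl.
  destruct (Nat.eq_dec i k).
  - subst. destruct (G k a), (G k b); simpl; try congruence; lia.
  - assert (1 <= stepsum G k a b)%nat by (apply IHk; exists i; split; [lia|auto]). lia.
Qed.

Definition pat (G : nat -> R -> bool) (m : nat) (t : R) : list bool := map (fun i => G i t) (seq 0 m).

Lemma len_bound G m T : NoDup (map (pat G m) T) -> (length T <= 1 + sumchg G m T)%nat.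
Proof.
  induction T as [|a T IH]; intros HN; simpl; [lia|].
  destruct T as [|b T']; simpl; [lia|].
  rewrite sumchg_cons.
  inversion HN; subst. specialize (IH H2).
  assert (1 <= stepsum G m a b)%nat.
  { apply stepsum_pos. apply NNPP; intro Hn. apply H1. left. unfold pat.
    apply map_ext_in. intros i Hi. apply in_seq in Hi.
    apply NNPP; intro Hd; apply Hn; exists i; split; [lia|auto]. }
  simpl in IH. lia.
Qed.

Lemma sumchg_le G m T K : (forall i, (i < m)%nat -> (chg (G i) T <= K)%nat) -> (sumchg G m T <= m * K)%nat.
Proof.
  induction m; intros H; simpl; [lia|].
  assert (sumchg G m T <= m * K)%nat by (apply IHm; intros; apply H; lia).
  specialize (H m ltac:(lia)). lia.
Qed.

Fixpoint ins (x : R) (l : list R) : list R :=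
  match l with
  | [] => [x]
  | y :: l' => if Rlt_dec x y then x :: y :: l' else y :: ins x l'
  end.

Lemma ins_perm x l : Permutation (x :: l) (ins x l).
Proof.
  induction l as [|y l IH]; simpl; auto.
  destruct (Rlt_dec x y); auto.
  eapply perm_trans; [apply perm_swap|]. constructor; auto.
Qed.

Lemma ins_sorted x l : StronglySorted Rlt l -> ~ In x l -> StronglySorted Rlt (ins x l).
Proof.
  induction l as [|y l IH]; intros Hs Hn; simpl.
  - repeat constructor.
  - inversion Hs; subst. destruct (Rlt_dec x y).
    + constructor; auto. constructor; auto.
      rewrite Forall_forall in *. intros z Hz. specialize (H2 z Hz); lra.
    + constructor.
      * apply IH; auto. intro; apply Hn; right; auto.
      * rewrite Forall_forall in *. intros z Hz.
        apply (Permutation_in _ (Permutation_sym (ins_perm x l))) in Hz.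
        destruct Hz as [<-|Hz]; auto.
        assert (x <> y) by (intro; subst; apply Hn; left; auto). lra.
Qed.

Fixpoint isort (l : list R) : list R := match l with [] => [] | x :: l' => ins x (isort l') end.

Lemma isort_perm l : Permutation l (isort l).
Proof. induction l; simpl; auto. eapply perm_trans; [constructor; eauto| apply ins_perm]. Qed.

Lemma isort_sorted l : NoDup l -> StronglySorted Rlt (isort l).
Proof.
  induction l; intros H; simpl; [constructor|]. inversion H; subst.
  apply ins_sorted; auto. intro Hi; apply H2.
  apply (Permutation_in _ (Permutation_sym (isort_perm l))); auto.
Qed.

Fixpoint allb (m : nat) : list (list bool) :=
  match m with 0 => [[]] | S k => map (cons true) (allb k) ++ map (cons false) (allb k) end.

Lemma allb_len m : length (allb m) = (2 ^ m)%nat.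
Proof. induction m; simpl; auto. rewrite length_app, !length_map, IHm. lia. Qed.

Lemma allb_nodup m : NoDup (allb m).
Proof.
  induction m; simpl; [repeat constructor; intros []|].
  apply NoDup_app.
  - apply FinFun.Injective_map_NoDup; auto. intros a b H; injection H; auto.
  - apply FinFun.Injective_map_NoDup; auto. intros a b H; injection H; auto.
  - intros a Ha Hb. apply in_map_iff in Ha, Hb. destruct Ha as [? [<- _]]. destruct Hb as [? [E _]]. discriminate.
Qed.

Lemma allb_length m l : In l (allb m) -> length l = m.
Proof.
  revert l; induction m; simpl; intros l H.
  - destruct H as [<-|[]]; auto.
  - apply in_app_or in H. destruct H as [H|H]; apply in_map_iff in H; destruct H as [l' [<- H]]; simpl; auto.
Qed.

Lemma map_seq_nth (h : nat -> bool) l s : (forall i, (i < length l)%nat -> h (s + i)%nat = nth i l false) ->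
  map h (seq s (length l)) = l.
Proof.
  revert s; induction l as [|a l IH]; intros s H; simpl; auto.
  f_equal.
  - specialize (H 0%nat ltac:(simpl; lia)). rewrite Nat.add_0_r in H. auto.
  - apply IH. intros i Hi. specialize (H (S i) ltac:(simpl; lia)).
    replace (S s + i)%nat with (s + S i)%nat by lia. auto.
Qed.

Lemma realize_all (G : nat -> R -> bool) m :
  (forall b : nat -> bool, exists rho, forall i, (i < m)%nat -> G i rho = b i) ->
  forall Ls : list (list bool), (forall l, In l Ls -> length l = m) ->
  exists Rs, map (pat G m) Rs = Ls.
Proof.
  intros Hb Ls. induction Ls as [|l Ls IH]; intros HL.
  - exists []; auto.
  - destruct IH as [Rs HR]. intros; apply HL; right; auto.
    destruct (Hb (fun i => nth i l false)) as [rho Hr].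
    exists (rho :: Rs). simpl. rewrite HR. f_equal.
    unfold pat. rewrite <- (HL l (or_introl eq_refl)).
    apply map_seq_nth. intros i Hi. simpl. apply Hr. rewrite <- (HL l (or_introl eq_refl)); auto.
Qed.

Lemma nat_bound m Sm : (2 ^ m <= 1 + m * (4 * Sm + 3))%nat -> (2 <= Sm)%nat -> (2 ^ (m / 5) <= Sm)%nat.
Proof.
  intros H HS.
  pose proof (Nat.div_mod m 5 ltac:(lia)) as Hm. pose proof (Nat.mod_upper_bound m 5 ltac:(lia)).
  set (q := (m / 5)%nat) in *.
  destruct q as [|[|q']] eqn:Eq; [simpl; lia|simpl; lia|].
  apply NNPP; intro Hn.
  set (P := (2 ^ S (S q'))%nat) in *.
  assert (P >= 4)%nat.
  { unfold P. simpl. pose proof (Nat.pow_le_mono_r 2 0 q' ltac:(lia) ltac:(lia)). simpl in *. lia. }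
  assert (S (S q') < P)%nat by (apply Nat.pow_gt_lin_r; lia).
  assert (P ^ 5 <= 2 ^ m)%nat.
  { unfold P. rewrite <- Nat.pow_mul_r. apply Nat.pow_le_mono_r; lia. }
  assert (m <= 5 * P + 4)%nat by lia.
  assert (Sm <= P - 1)%nat by lia.
  assert (P ^ 5 <= 1 + (5 * P + 4) * (4 * P - 1))%nat.
  { eapply Nat.le_trans; [eassumption|]. eapply Nat.le_trans; [eassumption|].
    apply Nat.add_le_mono_l. apply Nat.mul_le_mono; lia. }
  assert (P ^ 5 = P * P * P * P * P)%nat by (simpl; lia).
  assert (P * P * P >= 64)%nat by nia.
  nia.
Qed.

Lemma ln_le' x y : 0 < x -> x <= y -> ln x <= ln y.
Proof. intros. destruct (Rle_lt_or_eq_dec x y H0) as [h|h]. left; apply ln_increasing; auto. subst; lra. Qed.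

Lemma real_bound m Sm : (2 ^ (m / 5) <= Sm)%nat -> (2 <= Sm)%nat -> INR m <= 18 * ln (INR Sm).
Proof.
  intros H HS.
  pose proof (Nat.div_mod m 5 ltac:(lia)) as Hm. pose proof (Nat.mod_upper_bound m 5 ltac:(lia)).
  set (q := (m / 5)%nat) in *.
  assert (Hmq : INR m <= 5 * INR q + 4).
  { assert (m <= 5 * q + 4)%nat by lia. apply le_INR in H1. rewrite plus_INR, mult_INR in H1. simpl in H1. lra. }
  pose proof ln_lt_2.
  assert (H2 : INR q * ln 2 <= ln (INR Sm)).
  { rewrite <- ln_pow by lra. apply ln_le'. apply pow_lt; lra.
    replace 2 with (INR 2) by (simpl; lra). rewrite <- pow_INR. apply le_INR; auto. }
  assert (H3 : ln 2 <= ln (INR Sm)).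
  { apply ln_le'; [lra|]. replace 2 with (INR 2) by (simpl; lra). apply le_INR; auto. }
  pose proof (pos_INR q).
  nra.
Qed.

Theorem mainTheorem2 :
  exists C : R, 0 < C /\
    forall (X : Type) (u : R -> X -> R) (B1 B2 : nat),
      (2 <= B1 + B2)%nat ->
      (forall x : X, piecewise_continuous_at_most (fun rho => u rho x) B1 /\
                     at_most_local_maxima (fun rho => u rho x) B2) ->
      forall (m : nat) (x : nat -> X),
        pseudo_shattered u m x -> INR m <= C * ln (INR (B1 + B2)).
Proof.
  exists 18. split; [lra|].
  intros X u B1 B2 HB Hx m x [_ [r Hr]].
  set (G := fun i rho => gb (fun rho => u rho (x i)) (r i) rho).
  assert (Hb : forall b : nat -> bool, exists rho, forall i, (i < m)%nat -> G i rho = b i).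
  { intros b. destruct (Hr b) as [rho Hrho]. exists rho. intros i Hi.
    specialize (Hrho i Hi). unfold G.
    destruct (b i) eqn:E.
    - apply gb_true. apply Hrho; auto.
    - apply gb_false. apply Rnot_le_lt. intro Hle. apply Hrho in Hle. discriminate. }
  destruct (realize_all G m Hb (allb m) (allb_length m)) as [Rs HRs].
  assert (HN : NoDup (map (pat G m) Rs)) by (rewrite HRs; apply allb_nodup).
  set (T := isort Rs).
  assert (HT : StronglySorted Rlt T) by (apply isort_sorted; eapply NoDup_map_inv; eauto).
  assert (HNT : NoDup (map (pat G m) T)).
  { eapply Permutation_NoDup; [apply Permutation_map, isort_perm| auto]. }
  assert (HL : length T = (2 ^ m)%nat).
  { unfold T. rewrite <- (Permutation_length (isort_perm Rs)).
    rewrite <- (length_map (pat G m)), HRs. apply allb_len. }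
  pose proof (len_bound G m T HNT) as H1.
  assert (H2 : (sumchg G m T <= m * (4 * (B1 + B2) + 3))%nat).
  { apply sumchg_le. intros i Hi. unfold G.
    destruct (Hx (x i)) as [Hp Hm]. apply one_fun; auto. }
  apply real_bound; auto. apply nat_bound; auto. lia.
Qed.
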